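(* Let $\nu$ be a translation invariant EA$_\beta$ spin glass distribution on $\mathbb Z^2$ ($0\le\beta<\infty$), and let $\gamma$ be a finite dual graph which is a union of disjoint simple dual cycles. Then for every $c>0$, \[\mathbb P_\nu\Big(\sum_{e^*\in\gamma}w_e\sigma_{i_e}\sigma_{j_e}\leq -c\Big)<e^{-2\beta c},\] where $e=\{i_e,j_e\}$ is the primal edge crossed by $e^*$. Moreover, for every finite subgraph $D$ of $\mathbb Z^2$ with $D_\gamma\subseteq D$, every boundary condition $\tau$ and every realization of the interactions $w$, \[\mathbb P^{D,\tau}_{w,\beta}(\text{every edge of }\gamma\text{ is unsatisfied})<e^{-2\beta|w|(\gamma)}.\]
   Context: Lattice $\mathbb Z^2$, dual lattice $(\mathbb Z^2)^*=(\tfrac12,\tfrac12)+\mathbb Z^2$; a dual edge $e^*$ is identified with the unique edge $e$ of $\mathbb Z^2$ it crosses and carries its interaction $w_e$. $D_\gamma$ is the set of vertices of $\mathbb Z^2$ lying in the bounded domains enclosed by $\gamma$; $|w|(\gamma)=\sum_{e^*\in\gamma}|w_e|$. For a finite subgraph $C$: $C^c$ is the subgraph on $\mathbb Z^2\setminus V(C)$, $\partial C^c$ the vertices of $C^c$ with a neighbour in $C$, $\bar C=C\cup\partial C^c$; for $\tau\in\{\pm1\}^{V(\partial C^c)}$, $\Omega^{C,\tau}$ is the set of spin configurations on $\bar C$ equal to $\tau$ on $\partial C^c$, $\mathcal H^{C,\tau}_w(\sigma)=-\sum w_{xy}\sigma_x\sigma_y$ over neighbouring pairs in $\bar C$, and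 $\mathbb P^{C,\tau}_{w,\beta}(\sigma)\propto e^{-\beta\mathcal H^{C,\tau}_w(\sigma)}$. An EA$_\beta$ spin glass distribution is a joint law of interactions $w$ (i.i.d. standard normal) and spins $\sigma\in\{\pm1\}^{\mathbb Z^2}$ such that for every finite $C$ the conditional law of $\sigma_{\bar C}$ given $\sigma_{C^c}$ and $w$ is $\mathbb P^{C,\sigma_{\partial C^c}}_{w,\beta}$; translation invariance is under the diagonal action of $\mathbb Z^2$. An edge $e=\{i,j\}$ (and $e^*$) is unsatisfied if $w_e\sigma_i\sigma_j<0$. *)

(* Defs.v *)
From HB Require Import structures.
From mathcomp Require Import all_boot all_order all_algebra.
From mathcomp Require Import all_classical all_reals all_analysis.
Set Implicit Arguments. Unset Strict Implicit. Unset Printing Implicit Defensive.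
Import Order.TTheory GRing.Theory Num.Theory.
Import numFieldNormedType.Exports.
Local Open Scope classical_set_scope.
Local Open Scope ring_scope.

Definition Z2 := (int * int)%type.

(** An edge is encoded by its lower-left endpoint and a direction:
    (x, true)  = {x, x + (1,0)}   (horizontal edge)
    (x, false) = {x, x + (0,1)}   (vertical edge).
    Every nearest-neighbour pair of Z^2 has exactly one code. *)
Definition edge := (Z2 * bool)%type.
Definition end1 (e : edge) : Z2 := e.1.
Definition end2 (e : edge) : Z2 :=
  if e.2 then (e.1.1 + 1, e.1.2)%R else (e.1.1, e.1.2 + 1)%R.

Definition nbrs (x : Z2) : seq Z2 :=
  [:: (x.1 + 1, x.2); (x.1 - 1, x.2); (x.1, x.2 + 1); (x.1, x.2 - 1)]%R.

Definition spin {R : realType} (b : bool) : R := if b then 1 else -1.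

(** * Finite domains.  A finite subgraph C is represented by its (finite) vertex
    set V(C) (everything below only depends on V(C)). *)
Definition bdry (C : seq Z2) : seq Z2 :=
  undup [seq y <- flatten (map nbrs C) | y \notin C].
Definition clos (C : seq Z2) : seq Z2 := undup C ++ bdry C.
Definition edges_in (S : seq Z2) : seq edge :=
  [seq e <- [seq (x, b) | x <- S, b <- [:: true; false]] | end2 e \in S].

Definition glue (C : seq Z2) (tau : Z2 -> bool) (f : {ffun seq_sub C -> bool})
  : Z2 -> bool :=
  fun x => match (insub x : option (seq_sub C)) with
           | Some y => f y | None => tau x end.

Definition hamil {R : realType} (C : seq Z2) (w : edge -> R) (s : Z2 -> bool) : R :=
  - \sum_(e <- edges_in (clos C)) w e * spin (s (end1 e)) * spin (s (end2 e)).

(** P^{C,tau}_{w,beta}(A) for an event A on configurations (the configurations of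
    Omega^{C,tau} are the glue C tau f, f ranging over spins on V(C)) *)
Definition gibbs {R : realType} (C : seq Z2) (tau : Z2 -> bool) (w : edge -> R)
  (beta : R) (A : (Z2 -> bool) -> bool) : R :=
  (\sum_(f : {ffun seq_sub C -> bool} | A (glue tau f))
      expR (- beta * hamil C w (glue tau f)))
  / (\sum_(f : {ffun seq_sub C -> bool}) expR (- beta * hamil C w (glue tau f))).

Definition restr (S : seq Z2) (s : Z2 -> bool) : {ffun seq_sub S -> bool} :=
  [ffun y : seq_sub S => s (val y)].

Definition Omega (R : realType) := ((edge -> R) * (Z2 -> bool))%type.

Definition coord_gens (R : realType) (V : Z2 -> Prop) : set (set (Omega R)) :=
  [set A | (exists (e : edge) (B : set R), measurable B /\ A = [set om | B (om.1 e)])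
        \/ (exists (x : Z2) (b : bool), V x /\ A = [set om | om.2 x = b])].

Definition OmegaM (R : realType) := g_sigma_algebraType (@coord_gens R (fun _ => True)).

Definition iid_std_normal {R : realType} (P : probability (OmegaM R) R) : Prop :=
  forall (es : seq edge) (B : edge -> set R), uniq es ->
    (forall e, measurable (B e)) ->
    P [set om : OmegaM R | forall e, e \in es -> B e (om.1 e)]
    = \big[*%E/1%E]_(e <- es) normal_prob 0 1 (B e).

(** DLR condition: for every finite C, the conditional law of sigma_{C̄} given
    (sigma_{C^c}, w) is P^{C, sigma_{∂C^c}}_{w,beta}; i.e. for every event E on
    C̄-configurations and every event A of the sigma-algebra generated by
    sigma_{C^c} and w,  P(A ∩ {sigma_{C̄} ∈ E}) = ∫_A P^{C,sigma}_{w,beta}(E) dP. *)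
Definition DLR {R : realType} (P : probability (OmegaM R) R) (beta : R) : Prop :=
  forall (C : seq Z2) (E : {ffun seq_sub (clos C) -> bool} -> bool)
         (A : set (OmegaM R)),
    <<s @coord_gens R (fun x => x \notin C) >> A ->
    P (A `&` [set om | E (restr (clos C) om.2)])
    = (\int[P]_(om in A)
         (gibbs C om.2 om.1 beta (fun s => E (restr (clos C) s)))%:E)%E.

Definition EA_spin_glass {R : realType} (beta : R) (P : probability (OmegaM R) R) : Prop :=
  iid_std_normal P /\ DLR P beta.

Definition shift {R : realType} (a : Z2) (om : OmegaM R) : OmegaM R :=
  (fun e : edge => om.1 ((e.1.1 + a.1, e.1.2 + a.2)%R, e.2),
   fun x : Z2 => om.2 (x.1 + a.1, x.2 + a.2)%R).

Definition transl_invariant {R : realType} (P : probability (OmegaM R) R) : Prop :=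
  forall (a : Z2) (A : set (OmegaM R)), measurable A ->
    P (shift a @^-1` A) = P A.

(** * Dual lattice.  The dual vertex (a,b) stands for the point (a+1/2, b+1/2). *)
Definition dvert := (int * int)%type.

Definition dual_ends (e : edge) : dvert * dvert :=
  if e.2 then ((e.1.1, e.1.2 - 1), (e.1.1, e.1.2))%R
  else ((e.1.1 - 1, e.1.2), (e.1.1, e.1.2))%R.

Definition crosses (e : edge) (u v : dvert) : bool :=
  (dual_ends e == (u, v)) || (dual_ends e == (v, u)).

Definition cnext (p : seq dvert) (i : nat) : dvert := nth (0, 0)%R p (i.+1 %% size p).

Definition simple_dual_cycle (p : seq dvert) : Prop :=
  (3 <= size p)%N /\ uniq p /\
  forall i, (i < size p)%N -> exists e, crosses e (nth (0,0)%R p i) (cnext p i).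

(** the dual edges of the cycle p (identified with the primal edges they cross) *)
Definition cycle_edge (p : seq dvert) (e : edge) : Prop :=
  exists i, (i < size p)%N /\ crosses e (nth (0,0)%R p i) (cnext p i).

Definition union_disjoint_simple_cycles (g : seq edge) : Prop :=
  exists cs : seq (seq dvert),
    cs != [::] /\
    (forall p, p \in cs -> simple_dual_cycle p) /\
    (forall i j, (i < size cs)%N -> (j < size cs)%N -> i <> j ->
       forall v, v \in nth [::] cs i -> v \notin nth [::] cs j) /\
    (forall e, e \in g <-> exists2 p, p \in cs & cycle_edge p e).

Definition dpt {R : realType} (v : dvert) : R * R :=
  (v.1%:~R + 2^-1, v.2%:~R + 2^-1).

Definition segment {R : realType} (p q : R * R) : set (R * R) :=
  [set z | exists t : R, 0 <= t <= 1 /\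
           z = (p.1 + t * (q.1 - p.1), p.2 + t * (q.2 - p.2))].

Definition gamma_set {R : realType} (g : seq edge) : set (R * R) :=
  [set z | exists2 e, e \in g & segment (dpt (dual_ends e).1) (dpt (dual_ends e).2) z].

Definition D_gamma {R : realType} (g : seq edge) (v : Z2) : Prop :=
  let z : R * R := (v.1%:~R, v.2%:~R) in
  ~ gamma_set g z /\ bounded_set (connected_component (~` gamma_set g) z).

Definition gamma_energy {R : realType} (g : seq edge) (w : edge -> R) (s : Z2 -> bool) : R :=
  \sum_(e <- g) w e * spin (s (end1 e)) * spin (s (end2 e)).

Definition absw {R : realType} (g : seq edge) (w : edge -> R) : R :=
  \sum_(e <- g) `|w e|.

Definition unsatisfied {R : realType} (w : edge -> R) (s : Z2 -> bool) (e : edge) : bool :=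
  w e * spin (s (end1 e)) * spin (s (end2 e)) < 0.

(* Main.v *)
Require Import Defs.
From HB Require Import structures.
From mathcomp Require Import all_boot all_order all_algebra.
From mathcomp Require Import all_classical all_reals all_analysis.
From mathcomp Require Import measurable_realfun.
From mathcomp Require Import zify ring lra.
Import Order.TTheory GRing.Theory Num.Theory.
Import numFieldNormedType.Exports.
Local Open Scope classical_set_scope.
Local Open Scope ring_scope.
Set Implicit Arguments. Unset Strict Implicit. Unset Printing Implicit Defensive.

Section MeasCoord.
Variable R : realType.

Lemma mcoord1 (V : Z2 -> Prop) (e : edge) :
  measurable_fun [set: g_sigma_algebraType (@coord_gens R V)] (fun om => om.1 e).
Proof.
move=> _ Y mY; rewrite setTI; apply: sub_sigma_algebra; left; exists e, Y; split => //.
Qed.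

Lemma mcoord2 (h : bool -> R) (x : Z2) :
  measurable_fun [set: OmegaM R] (fun om => h (om.2 x)).
Proof.
move=> _ Y mY; rewrite setTI.
have gb b : measurable [set om : OmegaM R | om.2 x = b].
  by apply: sub_sigma_algebra; right; exists x, b.
have -> : (fun om : OmegaM R => h (om.2 x)) @^-1` Y =
  ([set om : OmegaM R | om.2 x = true] `&` [set _ | Y (h true)]) `|`
  ([set om : OmegaM R | om.2 x = false] `&` [set _ | Y (h false)]).
  apply/seteqP; split => om /=.
    by case: (om.2 x) => hY; [left|right].
  by case=> -[-> //].
apply: measurableU; apply: measurableI => //.
  by case: (pselect (Y (h true))) => hY; [rewrite (_ : [set _ | _] = setT) //; apply/seteqP; split|rewrite (_ : [set _ | _] = set0) //; apply/seteqP; split].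
by case: (pselect (Y (h false))) => hY; [rewrite (_ : [set _ | _] = setT) //; apply/seteqP; split|rewrite (_ : [set _ | _] = set0) //; apply/seteqP; split].
Qed.

Lemma mfin2 (L : seq Z2) (G : (Z2 -> bool) -> R) :
  (forall s s', (forall x, x \in L -> s x = s' x) -> G s = G s') ->
  measurable_fun [set: OmegaM R] (fun om => G om.2).
Proof.
elim: L G => [|x L IH] G hG.
  have -> : (fun om : OmegaM R => G om.2) = cst (G (fun _ => false)).
    by apply/funext => om; apply: hG.
  exact: measurable_cst.
pose G1 := fun s : Z2 -> bool => G (fun y => if y == x then true else s y).
pose G0 := fun s : Z2 -> bool => G (fun y => if y == x then false else s y).
have hG1 : measurable_fun [set: OmegaM R] (fun om => G1 om.2).
  apply: IH => s s' hs; apply: hG => y hy; case: eqP => // /eqP hyx.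
  by apply: hs; move: hy; rewrite inE (negbTE hyx).
have hG0 : measurable_fun [set: OmegaM R] (fun om => G0 om.2).
  apply: IH => s s' hs; apply: hG => y hy; case: eqP => // /eqP hyx.
  by apply: hs; move: hy; rewrite inE (negbTE hyx).
have -> : (fun om : OmegaM R => G om.2) =
   (fun om => (if om.2 x then 1 else 0) * G1 om.2 + (if om.2 x then 0 else 1) * G0 om.2).
  apply/funext => om; rewrite /G1 /G0.
  case hx : (om.2 x); rewrite ?mul1r ?mul0r ?addr0 ?add0r; apply: hG => y _;
    case: eqP => // ->; by rewrite hx.
apply: measurable_funD; apply: measurable_funM => //.
  exact: (mcoord2 (fun b => if b then 1 else 0)).
exact: (mcoord2 (fun b => if b then 0 else 1)).
Qed.

End MeasCoord.
Section X. Variable R : realType.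
Lemma bigU_mem {I : eqType} (s : seq I) (F : I -> set (OmegaM R)) x :
  (\big[setU/set0]_(i <- s) F i) x <-> exists2 i, i \in s & F i x.
Proof.
elim: s => [|i s IH]; rewrite ?big_nil ?big_cons.
  by split => // -[].
split.
  case=> [h|/IH [j js hj]]; first by exists i; rewrite ?inE ?eqxx.
  by exists j; rewrite // inE js orbT.
move=> [j]; rewrite inE => /orP[/eqP ->|js] hj; first by left.
by right; apply/IH; exists j.
Qed.

Lemma P_bigU (P : probability (OmegaM R) R) {I : eqType} (s : seq I) (F : I -> set (OmegaM R)) :
  uniq s -> (forall i, measurable (F i)) -> (forall i j, i != j -> F i `&` F j = set0) ->
  P (\big[setU/set0]_(i <- s) F i) = (\sum_(i <- s) P (F i))%E.
Proof.
elim: s => [|i s IH] /= us mF dF; first by rewrite !big_nil measure0.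
move/andP: us => [nis us].
rewrite !big_cons measureU //; first by congr (_ + _)%E; apply: IH.
- by apply: bigsetU_measurable.
apply/seteqP; split => // x [h1 /bigU_mem [j js hj]].
have hij : i != j by apply: contraNneq nis => ->.
by rewrite -(dF _ _ hij); split.
Qed.
Lemma glue_dep (C : seq Z2) (f : {ffun seq_sub C -> bool}) (s s' : Z2 -> bool) x :
  s x = s' x -> Defs.glue s f x = Defs.glue s' f x.
Proof. by rewrite /Defs.glue; case: (insub x). Qed.

Lemma mhamil (C : seq Z2) (f : {ffun seq_sub C -> bool}) :
  measurable_fun [set: OmegaM R] (fun om : OmegaM R => hamil C om.1 (Defs.glue om.2 f)).
Proof.
have -> : (fun om : OmegaM R => hamil C om.1 (Defs.glue om.2 f)) =
  \- (fun om : OmegaM R => \sum_(e <- edges_in (clos C))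
        (om.1 e * (spin (Defs.glue om.2 f (end1 e)) * spin (Defs.glue om.2 f (end2 e))))).
  by apply/funext => om; rewrite /hamil /=; congr (- _); apply: eq_bigr => e _; rewrite mulrA.
apply: measurable_funN; apply: measurable_sum => e.
apply: measurable_funM; first exact: (@mcoord1 R (fun _ => True) e).
apply: (@mfin2 R [:: end1 e; end2 e] (fun s => spin (Defs.glue s f (end1 e)) * spin (Defs.glue s f (end2 e)))).
move=> s s' hs; rewrite (@glue_dep _ _ s s') ?(@glue_dep _ _ s s' (end2 e)) //; apply: hs;
  by rewrite !inE eqxx ?orbT.
Qed.

Lemma gibbs_ge0 (C : seq Z2) tau (w : edge -> R) beta E : 0 <= gibbs C tau w beta E.
Proof.
by rewrite /gibbs divr_ge0 //; apply: sumr_ge0 => f _; apply: ltW; apply: expR_gt0.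
Qed.

Lemma mgibbs (C : seq Z2) (beta : R) (E : (Z2 -> bool) -> bool) (L : seq Z2) :
  (forall (f : {ffun seq_sub C -> bool}) s s', (forall x, x \in L -> s x = s' x) ->
      E (Defs.glue s f) = E (Defs.glue s' f)) ->
  measurable_fun [set: OmegaM R] (fun om : OmegaM R => gibbs C om.2 om.1 beta E).
Proof.
move=> hE.
pose ex := fun (f : {ffun seq_sub C -> bool}) (om : OmegaM R) => expR (- beta * hamil C om.1 (Defs.glue om.2 f)).
have mex f : measurable_fun [set: OmegaM R] (ex f).
  change (measurable_fun [set: OmegaM R] (expR \o (fun om : OmegaM R => - beta * hamil C om.1 (Defs.glue om.2 f)))).
  have h1 := @measurable_expR R.
  have h2 : measurable_fun [set: OmegaM R] (fun om : OmegaM R => - beta * hamil C om.1 (Defs.glue om.2 f)).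
    by apply: measurable_funM => //; exact: mhamil.
  have := measurableT_comp h1 h2.
  exact.
pose Z := fun om => \sum_f ex f om.
have hZ om : 0 < Z om.
  rewrite /Z (bigD1 [ffun => true]) //=; apply: ltr_pwDl; first exact: expR_gt0.
  by apply: sumr_ge0 => f _; apply: ltW; apply: expR_gt0.
have -> : (fun om : OmegaM R => gibbs C om.2 om.1 beta E) =
  (fun om => (\sum_f ((E (Defs.glue om.2 f))%:R * ex f om)) * expR (- ln (Z om))).
  apply/funext => om; rewrite /gibbs expRN lnK ?posrE //; congr (_ / _).
  by rewrite big_mkcond /=; apply: eq_bigr => f _; case: (E _); rewrite ?mul1r ?mul0r.
apply: measurable_funM.
  apply: measurable_sum => f; apply: measurable_funM => //.
  by apply: (@mfin2 R L (fun s => (E (Defs.glue s f))%:R)) => s s' hs; rewrite (hE f s s').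
have h1 := @measurable_expR R.
have h3 := @measurable_ln R.
have mZ : measurable_fun [set: OmegaM R] Z by exact: measurable_sum.
have h4 := measurableT_comp h3 mZ.
have h5 := measurable_funN h4.
exact: (measurableT_comp h1 h5).
Qed.

Lemma sub_meas (V : Z2 -> Prop) (A : set (OmegaM R)) :
  <<s @coord_gens R V >> A -> measurable A.
Proof.
apply: smallest_sub; first exact: smallest_sigma_algebra.
move=> B hB; apply: sub_sigma_algebra; case: hB => [h|[x [b [_ ->]]]]; first by left.
by right; exists x, b.
Qed.

End X.
Section Comb.
Variable g : seq edge.

Definition hcnt (a b : int) : nat :=
  count (fun e : edge => [&& e.2, e.1.2 == b & a <= e.1.1]) g.
Definition Sf (x : Z2) : bool := odd (hcnt x.1 x.2).

Lemma count_split {T : eqType} (p q r : pred T) s :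
  (forall x, p x = q x || r x) -> (forall x, ~~ (q x && r x)) ->
  count p s = (count q s + count r s)%N.
Proof.
move=> H1 H2; elim: s => //= x s ->; rewrite H1.
have := H2 x; case: (q x); case: (r x) => //= _; lia.
Qed.

Lemma sum_count {T : Type} (P : pred T) s : (\sum_(v <- s) (P v : nat))%N = count P s.
Proof. by elim: s => [|x s IH]; rewrite ?big_nil ?big_cons ?IH. Qed.

Hypothesis ug : uniq g.

Lemma Sf_h a b : Sf (a, b) (+) Sf (a + 1, b) = (((a, b), true) \in g).
Proof.
rewrite /Sf /hcnt /=.
rewrite (@count_split _ _ (fun e : edge => [&& e.2, e.1.2 == b & a + 1 <= e.1.1])
   (pred1 ((a,b),true))).
- by rewrite oddD count_uniq_mem // oddb addbC addbA addbb.
- move=> [[x1 x2] []] /=; rewrite !xpair_eqE /= ?andbT; last first.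
    by case: (x1 == a); case: (x2 == b).
  case: (x2 == b); rewrite ?andbT ?andbF //.
  apply/idP/orP.
  + move=> h; case: (ltgtP x1 a) => h'; [lia| left; lia | right; by apply/eqP].
  + case=> [h|/eqP ->//]; lia.
- move=> [[x1 x2] []] //=; rewrite !xpair_eqE /=.
  apply/negP => /andP[/andP[_ h] /andP[/andP[/eqP h1 _] _]]; lia.
Qed.

Definition incident (v : dvert) (e : edge) : bool :=
  ((dual_ends e).1 == v) || ((dual_ends e).2 == v).

Lemma de_neq e : (dual_ends e).1 != (dual_ends e).2.
Proof.
case: e => [[x1 x2] []]; rewrite /dual_ends /= xpair_eqE negb_and;
  apply/orP; [right|left]; apply/negP => /eqP; lia.
Qed.

Lemma odd_sum3 {T : Type} (f : T -> nat) (p1 p2 p3 : pred T) s :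
  (forall e, odd (f e) = p1 e (+) p2 e (+) p3 e) ->
  odd (\sum_(e <- s) f e)%N = odd (count p1 s) (+) odd (count p2 s) (+) odd (count p3 s).
Proof.
move=> H; elim: s => [|x s IH]; rewrite ?big_nil ?big_cons //= !oddD IH H.
by case: (p1 x); case: (p2 x); case: (p3 x); case: (odd (count p1 s));
  case: (odd (count p2 s)); case: (odd (count p3 s)).
Qed.

Hypothesis edeg : forall v, ~~ odd (count (incident v) g).

Lemma Sf_v a b : Sf (a, b) (+) Sf (a, b + 1) = (((a, b), false) \in g).
Proof.
pose inR (u : dvert) := (u.2 == b) && (a <= u.1).
pose ends (e : edge) := [:: (dual_ends e).1; (dual_ends e).2].
pose V := undup [seq u <- flatten (map ends g) | inR u].
pose m (e : edge) := (inR (dual_ends e).1 + inR (dual_ends e).2)%N.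
have uV : uniq V by apply: undup_uniq.
have memV e u : e \in g -> u \in ends e -> (u \in V) = inR u.
  move=> eg ue; rewrite mem_undup mem_filter; case: (inR u) => //=.
  by apply/flatten_mapP; exists e.
have step1 e : e \in g -> m e = (\sum_(v <- V) (incident v e : nat))%N.
  move=> eg; rewrite sum_count.
  rewrite (@count_split _ _ (pred1 (dual_ends e).1) (pred1 (dual_ends e).2)).
  - by rewrite !count_uniq_mem // (memV e) ?inE ?eqxx // (memV e) ?inE ?eqxx ?orbT.
  - by move=> v; rewrite /incident /= eq_sym [(dual_ends e).2 == v]eq_sym.
  - move=> v /=; apply/negP => /andP[/eqP h1 /eqP h2].
    by move: (de_neq e); rewrite -h1 -h2 eqxx.
have even_sum : ~~ odd (\sum_(e <- g) m e)%N.
  rewrite (eq_big_seq (fun e => \sum_(v <- V) (incident v e : nat))%N); last first.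
    by move=> e eg; rewrite step1.
  rewrite exchange_big /=.
  apply: (big_ind (fun n => ~~ odd n)) => //.
    by move=> x y hx hy; rewrite oddD (negbTE hx) (negbTE hy).
  by move=> v _; rewrite sum_count.
have := even_sum.
rewrite (@odd_sum3 _ m (fun e : edge => [&& e.2, e.1.2 == b + 1 & a <= e.1.1])
   (fun e : edge => [&& e.2, e.1.2 == b & a <= e.1.1]) (pred1 ((a,b),false))).
- rewrite count_uniq_mem // /Sf /hcnt /=.
  by case: (odd (count _ g)); case: (odd (count _ g)); case: (_ \in g).
- move=> [[x1 x2] []]; rewrite /m /inR /dual_ends /= oddD !oddb !xpair_eqE /=.
  + rewrite andbF addbF.
    have -> : (x2 - 1 == b) = (x2 == b + 1).
      by apply/eqP/eqP => h; lia.
    by [].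
  + case: (x2 == b); rewrite /= ?andbT ?andbF //.
    case: (ltgtP x1 a) => h /=.
    * by have -> : (a <= x1 - 1) = false by apply/negP => h'; lia.
    * by have -> : (a <= x1 - 1) = true by apply/idP; lia.
    * by rewrite h; have -> : (a <= a - 1) = false by apply/negP => h'; lia.
Qed.

Definition Ub : int := 1 + \sum_(e <- g) (`|e.1.1| + `|e.1.2|).

Lemma Ub_bound e : e \in g -> `|e.1.1| < Ub /\ `|e.1.2| < Ub.
Proof.
move=> eg.
have : `|e.1.1| + `|e.1.2| <= \sum_(e <- g) (`|e.1.1| + `|e.1.2|).
  by rewrite (big_rem e eg) /= lerDl; apply: sumr_ge0 => i _; apply: addr_ge0.
rewrite /Ub; have := normr_ge0 e.1.1; have := normr_ge0 e.1.2; lia.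
Qed.

Lemma Sf_pos a b : Sf (a, b) -> a < Ub /\ - Ub < b < Ub.
Proof.
rewrite /Sf /hcnt /= => h.
have : has (fun e : edge => [&& e.2, e.1.2 == b & a <= e.1.1]) g.
  by rewrite has_count; case: (count _ g) h.
case/hasP => -[[x1 x2] d] eg /and3P[_ /eqP hb ha]; have [/= h1 h2] := Ub_bound eg.
move: h1 h2 hb ha; rewrite /= !ltr_norml => /andP[h1 h1'] /andP[h2 h2'] hb ha.
rewrite -hb; split; [lia | apply/andP; split; lia].
Qed.

Lemma succmod i k : (i < k)%N -> (i.+1 %% k)%N = if i == k.-1 then 0%N else i.+1.
Proof.
move=> hi; case: eqP => h.
  by rewrite h prednK ?modnn //; case: (k) hi.
rewrite modn_small //; move: h hi; case: k => //= k; lia.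
Qed.

Lemma de_sum e : (dual_ends e).2.1 + (dual_ends e).2.2 = (dual_ends e).1.1 + (dual_ends e).1.2 + 1.
Proof. case: e => [[x1 x2] []] /=; lia. Qed.

Lemma de_inj x y : dual_ends x = dual_ends y -> x = y.
Proof.
case: x => [[x1 x2] []]; case: y => [[y1 y2] []]; rewrite /dual_ends /=;
  move=> -[] h1 h2 h3 h4; try lia; by rewrite h3 h4.
Qed.

Lemma crosses_uniq x y u w : crosses x u w -> crosses y u w -> x = y.
Proof.
rewrite /crosses => /orP[] /eqP hx /orP[] /eqP hy; try by apply: de_inj; rewrite hx hy.
- have := de_sum x; have := de_sum y; rewrite hx hy /=; lia.
- have := de_sum x; have := de_sum y; rewrite hx hy /=; lia.
Qed.

Lemma crosses_inc x u w : crosses x u w -> incident u x && incident w x.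
Proof. by rewrite /crosses /incident => /orP[] /eqP -> /=; rewrite !eqxx ?orbT. Qed.

Lemma crosses_inc2 x a b v : crosses x a b -> incident v x -> (v == a) || (v == b).
Proof.
by rewrite /crosses /incident => /orP[] /eqP -> /= /orP[] /eqP <-; rewrite eqxx ?orbT.
Qed.

Lemma deg_even (hU : union_disjoint_simple_cycles g) v : ~~ odd (count (incident v) g).
Proof.
case: hU => cs [_ [hcyc [hdisj hg]]].
have same_cycle p p' : p \in cs -> p' \in cs -> v \in p -> v \in p' -> p = p'.
  move=> hp hp' vp vp'.
  have hi : (index p cs < size cs)%N by rewrite index_mem.
  have hj : (index p' cs < size cs)%N by rewrite index_mem.
  case: (index p cs =P index p' cs) => hij.
    by rewrite -(nth_index [::] hp) -(nth_index [::] hp') hij.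
  have := hdisj _ _ hi hj hij v.
  by rewrite !nth_index // vp vp' => /(_ isT).
have ends_in x : x \in g -> incident v x -> exists2 p, p \in cs & v \in p.
  move=> /hg [p pcs [j [hj hcr]]] hinc; exists p => //.
  have hk : (0 < size p)%N by case: (size p) hj.
  move: hcr hinc; rewrite /crosses /incident /cnext.
  by move=> /orP[] /eqP -> /orP[] /eqP <- /=; apply: mem_nth => //; rewrite ltn_pmod.
case: (boolP (has (fun p => v \in p) cs)); last first.
  move=> hn; suff -> : count (incident v) g = 0%N by [].
  apply/eqP; rewrite -leqn0 leqNgt -has_count; apply/hasP => -[x xg xinc].
  have [p pcs vp] := ends_in x xg xinc.
  by move/hasP: hn; apply; exists p.
move/hasP => [p pcs vp].
have [hk [up hcr]] := hcyc p pcs.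
set k := size p in hk hcr.
set i := index v p.
have hi : (i < k)%N by rewrite index_mem.
have pi : nth (0,0) p i = v by rewrite nth_index.
pose j0 := if i == 0%N then k.-1 else i.-1.
have hj0 : (j0 < k)%N by rewrite /j0; case: eqP => _; lia.
have sj0 : (j0.+1 %% k)%N = i by rewrite succmod // /j0; case: (i =P 0%N) => h; case: eqP => h'; lia.
have [e1 he1] := hcr i hi.
have [e0 he0] := hcr j0 hj0.
rewrite /cnext sj0 pi in he0; rewrite /cnext pi in he1.
have e0g : e0 \in g by apply/hg; exists p => //; exists j0; rewrite /cnext sj0 pi.
have e1g : e1 \in g by apply/hg; exists p => //; exists i; rewrite /cnext pi.
have nthq a b : (a < k)%N -> (b < k)%N -> nth (0,0) p a = nth (0,0) p b -> a = b.
  by move=> ha hb /eqP; rewrite nth_uniq // => /eqP.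
have hsi : (i.+1 %% k < k)%N by rewrite ltn_pmod //; lia.
have e01 : e0 != e1.
  apply/eqP => h; rewrite -h in he1; move: he0 he1; rewrite /crosses.
  move=> /orP[] /eqP -> /orP[] /eqP.
  - case=> h1 _.
    by have := nthq _ _ hj0 hi (etrans h1 (esym pi)); rewrite /j0; case: eqP; lia.
  - case=> h1.
    by have := nthq _ _ hj0 hsi h1; rewrite succmod // /j0; case: eqP; case: eqP; lia.
  - case=> h1.
    by have := nthq _ _ hj0 hsi h1; rewrite succmod // /j0; case: eqP; case: eqP; lia.
  - case=> h1 _.
    by have := nthq _ _ hi hsi (etrans pi h1); rewrite succmod //; case: eqP; lia.
have hperm : perm_eq [seq x <- g | incident v x] [:: e0; e1].
  apply: uniq_perm; first by rewrite seq.filter_uniq.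
    by rewrite /= inE e01.
  move=> x; rewrite mem_filter !inE.
  apply/idP/idP.
  - move=> /andP[xinc xg]; have [p' p'cs [j [hj hcr']]] := (hg x).1 xg.
    have hsj : (j.+1 %% size p' < size p')%N by rewrite ltn_pmod //; case: (size p') hj.
    have := crosses_inc2 hcr' xinc; rewrite /cnext => hv.
    have vp' : v \in p' by case/orP: hv => /eqP ->; apply: mem_nth.
    have ep := same_cycle _ _ pcs p'cs vp vp'; subst p'.
    case/orP: hv => /eqP hv.
    + have ji := nthq _ _ hj hi (etrans (esym hv) (esym pi)); subst j.
      by rewrite (crosses_uniq hcr' (etrans (congr1 (fun u => crosses e1 u _) pi) he1)) eqxx orbT.
    + have ji := nthq _ _ hsj hi (etrans (esym hv) (esym pi)).
      have jj0 : j = j0.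
        by move: ji; rewrite succmod // /j0; case: eqP => [-> <-|hne <-].
      subst j; rewrite /cnext sj0 pi in hcr'.
      by rewrite (crosses_uniq hcr' he0) eqxx.
  - by move=> /orP[] /eqP ->; rewrite ?e0g ?e1g andbT;
      [have := crosses_inc he0 | have := crosses_inc he1]; case/andP.
by rewrite -size_filter (perm_size hperm).
Qed.

Lemma Sf_left a b : a <= - Ub -> Sf (a, b) = false.
Proof.
move=> ha.
have step b' : Sf (a, b') = Sf (a, b' + 1).
  have := Sf_v a b'.
  have -> : ((a, b'), false) \in g = false.
    apply/negP => /Ub_bound /= [h _]; move: h; rewrite ltr_norml => /andP[h h']; lia.
  by case: (Sf (a, b')); case: (Sf (a, b' + 1)).
have ind n : Sf (a, b) = Sf (a, b + n%:Z).
  elim: n => [|n IH]; first by rewrite addr0.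
  by rewrite IH step; congr (Sf (_, _)); lia.
rewrite (ind `|Ub - b|%N); apply/negP => /Sf_pos [_ h]; lia.
Qed.

Lemma Sf_supp x : Sf x -> - Ub < x.1 < Ub /\ - Ub < x.2 < Ub.
Proof.
case: x => a b /= h; have [h1 h2] := Sf_pos h; split => //.
case: (ltrP (- Ub) a) => ha; first by rewrite h1.
by rewrite Sf_left in h.
Qed.



Section Topo.
Variable R : realType.

Definition rnd (r : R) : int := Num.floor (r + 2^-1).

Lemma rnd_bounds r : (rnd r)%:~R - 2^-1 <= r < (rnd r)%:~R + 2^-1.
Proof.
have := floor_itv (r + 2^-1); rewrite -/(rnd r) intrD => /andP[h1 h2].
apply/andP; split; lra.
Qed.

Lemma rnd_eq r k : k%:~R - 2^-1 <= r < k%:~R + 2^-1 -> rnd r = k.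
Proof.
move=> /andP[h1 h2]; apply: floor_def; rewrite intrD; apply/andP; split; lra.
Qed.

Lemma rnd_int (n : int) : rnd n%:~R = n.
Proof. apply: rnd_eq; apply/andP; split; lra. Qed.

Definition Fz (z : R * R) : bool := Sf (rnd z.1, rnd z.2).

Lemma coord_near r : exists2 d : R, 0 < d & forall y, `|r - y| < d ->
  rnd y = rnd r \/ (r = (rnd r)%:~R - 2^-1 /\ rnd y = rnd r - 1).
Proof.
set k := rnd r; have /andP[hk1 hk2] := rnd_bounds r; rewrite -/k in hk1 hk2.
case: (boolP (r == k%:~R - 2^-1)) => [/eqP hr|hr].
  exists (2^-1); first lra.
  move=> y; rewrite ltr_norml => /andP[h1 h2].
  case: (lerP (k%:~R - 2^-1) y) => hy.
    by left; apply: rnd_eq; apply/andP; split; lra.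
  right; split => //; apply: rnd_eq; rewrite intrB; apply/andP; split; lra.
have hk1' : k%:~R - 2^-1 < r by rewrite lt_neqAle hk1 andbT eq_sym.
exists (Num.min (r - (k%:~R - 2^-1)) (k%:~R + 2^-1 - r)).
  by rewrite lt_min; apply/andP; split; lra.
move=> y; rewrite lt_min => /andP[]; rewrite !ltr_norml => /andP[h1 h2] /andP[h3 h4].
by left; apply: rnd_eq; apply/andP; split; lra.
Qed.

Lemma hstep k1 k2 (z : R * R) : ~ gamma_set g z -> z.1 = k1%:~R - 2^-1 ->
  k2%:~R - 2^-1 <= z.2 <= k2%:~R + 2^-1 -> Sf (k1 - 1, k2) = Sf (k1, k2).
Proof.
move=> hz h1 /andP[h2 h3].
have : ((k1 - 1, k2), true) \notin g.
  apply/negP => hg; apply: hz; exists ((k1 - 1, k2), true) => //.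
  exists (z.2 - (k2%:~R - 2^-1)); split; first by apply/andP; split; lra.
  rewrite /dpt /dual_ends /= !intrB; case: z h1 h2 h3 => z1 z2 /= h1 h2 h3.
  congr (_, _); lra.
rewrite -Sf_h subrK; case: (Sf (k1 - 1, k2)); case: (Sf (k1, k2)) => //.
Qed.

Lemma vstep k1 k2 (z : R * R) : ~ gamma_set g z -> z.2 = k2%:~R - 2^-1 ->
  k1%:~R - 2^-1 <= z.1 <= k1%:~R + 2^-1 -> Sf (k1, k2 - 1) = Sf (k1, k2).
Proof.
move=> hz h1 /andP[h2 h3].
have : ((k1, k2 - 1), false) \notin g.
  apply/negP => hg; apply: hz; exists ((k1, k2 - 1), false) => //.
  exists (z.1 - (k1%:~R - 2^-1)); split; first by apply/andP; split; lra.
  rewrite /dpt /dual_ends /= !intrB; case: z h1 h2 h3 => z1 z2 /= h1 h2 h3.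
  congr (_, _); lra.
rewrite -Sf_v subrK; case: (Sf (k1, k2 - 1)); case: (Sf (k1, k2)) => //.
Qed.

Lemma loc_const z : ~ gamma_set g z -> nbhs z [set y | Fz y = Fz z].
Proof.
move=> hz.
have [d1 d1p hd1] := coord_near z.1; have [d2 d2p hd2] := coord_near z.2.
rewrite nbhs_ballP; exists (Num.min d1 d2); first by rewrite /= lt_min d1p d2p.
move=> y [hy1 hy2]; move: hy1 hy2; rewrite -!ball_normE /ball_ /= !lt_min.
move=> /andP[hy1 _] /andP[_ hy2].
have /andP[b1 b1'] := rnd_bounds z.1; have /andP[b2 b2'] := rnd_bounds z.2.
rewrite /Fz /=.
case: (hd1 _ hy1) => [-> | [ez1 ->]]; case: (hd2 _ hy2) => [-> | [ez2 ->]] //.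
- by apply: (vstep hz ez2); apply/andP; split; lra.
- by apply: (hstep hz ez1); apply/andP; split; lra.
- rewrite (vstep (k1 := rnd z.1 - 1) hz ez2); last by rewrite intrB; apply/andP; split; lra.
  by apply: (hstep hz ez1); apply/andP; split; lra.
Qed.

Lemma comp_F x : ~ gamma_set g x ->
  connected_component (~` gamma_set g) x `<=` [set y | Fz y = Fz x].
Proof.
move=> hx y [C [Cx CA Cc] Cy].
suff hB : C `&` [set y | Fz y = Fz x] = C.
  by move: Cy; rewrite -hB; case.
apply: Cc.
- by exists x; split.
- exists (interior [set y | Fz y = Fz x]); first exact: open_interior.
  apply/seteqP; split=> u [Cu hu]; split=> //.
    by rewrite /interior /= -hu; exact: loc_const (CA u Cu).
  exact: nbhs_singleton hu.
- exists (~` interior [set y | Fz y != Fz x]); first exact/open_closedC/open_interior.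
  apply/seteqP; split=> u [Cu hu]; split=> //.
    by move=> /nbhs_singleton /=; rewrite hu eqxx.
  case: (boolP (Fz u == Fz x)) => [/eqP //|hne]; exfalso; apply: hu.
  move: (loc_const (CA u Cu)); rewrite /interior /=; apply: filterS => v /= ->.
  exact: hne.
Qed.

Lemma half_not_int (m : int) : (m%:~R : R) <> 2^-1.
Proof.
move=> h; have : (m <= 0) || (1 <= m) by lia.
case/orP => hm.
  have h' : (m%:~R : R) <= 0 by rewrite lerz0.
  lra.
have h' : (1 : R) <= m%:~R by rewrite ler1z.
lra.
Qed.

Lemma rnd_le_bound (r : R) (U : int) : - U < rnd r < U -> `|r| <= U%:~R + 1.
Proof.
move=> /andP[h1 h2]; have /andP[b1 b2] := rnd_bounds r.
have h3 : (rnd r)%:~R <= (U - 1)%:~R :> R by rewrite ler_int; lia.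
have h4 : (- U + 1)%:~R <= (rnd r)%:~R :> R by rewrite ler_int; lia.
move: h3 h4; rewrite intrB intrD mulrNz => h3 h4.
rewrite ler_norml; apply/andP; split; lra.
Qed.

Lemma Sf_Dgamma x : Sf x -> D_gamma (R := R) g x.
Proof.
move=> hx; rewrite /D_gamma /=.
have nog : ~ gamma_set (R:=R) g (x.1%:~R, x.2%:~R).
  move=> [[[e1 e2] d] eg [t [/andP[t0 t1] hz]]]; move: hz.
  case: d eg => eg; rewrite /dpt /dual_ends /= => -[h1 h2].
    by apply: (@half_not_int (x.1 - e1)); rewrite intrB; lra.
  by apply: (@half_not_int (x.2 - e2)); rewrite intrB; lra.
split => //.
have hF : Fz (x.1%:~R, x.2%:~R) = true by rewrite /Fz /= !rnd_int -surjective_pairing.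
apply: filterS (nbhs_pinfty_ge (num_real (Ub%:~R + 1 : R))).
move=> M hM y /(comp_F nog) /=; rewrite hF /Fz => /Sf_supp /= [hy1 hy2].
rewrite prod_normE ge_max; apply/andP; split; apply: le_trans hM.
  exact: rnd_le_bound.
exact: rnd_le_bound.
Qed.

End Topo.

Section Flip.
Variable R : realType.

Lemma S_edge e : Sf (end1 e) (+) Sf (end2 e) = (e \in g).
Proof. by case: e => [[a b] []]; rewrite /end1 /end2 /= ?Sf_h ?Sf_v. Qed.

Lemma nbr12 e : end2 e \in nbrs (end1 e).
Proof. by case: e => [[a b] []]; rewrite /end1 /end2 /nbrs /= !inE eqxx ?orbT. Qed.

Lemma nbr21 e : end1 e \in nbrs (end2 e).
Proof.
case: e => [[a b] []]; rewrite /end1 /end2 /nbrs /= !inE.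
  by rewrite addrK eqxx orbT.
by rewrite addrK eqxx !orbT.
Qed.

Lemma mem_clos D x : x \in D -> x \in clos D.
Proof. by move=> h; rewrite /clos mem_cat mem_undup h. Qed.

Lemma nbr_clos D x y : x \in D -> y \in nbrs x -> y \in clos D.
Proof.
move=> hx hy; rewrite /clos mem_cat mem_undup; case: (boolP (y \in D)) => //= hyD.
rewrite /bdry mem_undup mem_filter hyD /=.
by apply/flatten_mapP; exists x.
Qed.

Lemma mem_edges_in S e : (e \in edges_in S) = (end1 e \in S) && (end2 e \in S).
Proof.
rewrite /edges_in mem_filter andbC; congr (_ && _).
apply/allpairsP/idP => [[[x b] [hx _ ->]] // | h].
exists (e.1, e.2); split => //; first by case: (e.2).
by case: e h.
Qed.

Variable D : seq Z2.
Hypothesis hSD : forall x, Sf x -> x \in D.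

Lemma g_in_edges e : e \in g -> e \in edges_in (clos D).
Proof.
move=> eg; rewrite mem_edges_in.
have := S_edge e; rewrite eg.
case h1 : (Sf (end1 e)) => /= h2.
  have d1 := hSD h1; by rewrite (mem_clos d1) (nbr_clos d1 (nbr12 e)).
have d2 : end2 e \in D by apply: hSD; move: h2; case: (Sf (end2 e)).
by rewrite (mem_clos d2) (nbr_clos d2 (nbr21 e)).
Qed.

Lemma uniq_clos : uniq (clos D).
Proof.
rewrite /clos cat_uniq undup_uniq /bdry undup_uniq andbT /=.
apply/hasPn => x; rewrite mem_undup mem_filter => /andP[hx _].
by rewrite mem_undup.
Qed.

Lemma uniq_edges : uniq (edges_in (clos D)).
Proof.
rewrite /edges_in seq.filter_uniq // allpairs_uniq ?uniq_clos //.
by move=> [x1 b1] [x2 b2] _ _ /= [-> ->].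
Qed.

Lemma spin_xor b c : spin (b (+) c) = spin b * (if c then -1 else 1) :> R.
Proof. by case: b; case: c; rewrite /spin /= ?mulr1 ?mulrN1 ?opprK. Qed.

Lemma hamil_flip (w : edge -> R) (s s' : Z2 -> bool) :
  (forall x, x \in clos D -> s' x = s x (+) Sf x) ->
  hamil D w s' = hamil D w s + 2 * gamma_energy g w s.
Proof.
move=> hs; rewrite /hamil /gamma_energy.
set T := fun e => w e * spin (s (end1 e)) * spin (s (end2 e)).
have h1 : \sum_(e <- edges_in (clos D)) w e * spin (s' (end1 e)) * spin (s' (end2 e))
        = \sum_(e <- edges_in (clos D)) (T e - 2 * ((e \in g)%:R * T e)).
  apply: eq_big_seq => e; rewrite mem_edges_in => /andP[h1 h2].
  rewrite !hs // !spin_xor /T -(S_edge e).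
  by case: (Sf (end1 e)); case: (Sf (end2 e)); rewrite /= ?mul1r ?mul0r ?mulr0 ?subr0; ring.
have h2 : \sum_(e <- edges_in (clos D)) (e \in g)%:R * T e = \sum_(e <- g) T e.
  rewrite (eq_bigr (fun e => if e \in g then T e else 0)); last first.
    by move=> e _; case: (e \in g); rewrite ?mul1r ?mul0r.
  rewrite -big_mkcond -big_filter; apply: perm_big.
  apply: uniq_perm; [by rewrite seq.filter_uniq // uniq_edges | exact: ug |].
  move=> x; rewrite mem_filter; apply/andP/idP => [[]//|hx]; split => //; exact: g_in_edges.
by rewrite h1 sumrB -mulr_sumr h2; ring.
Qed.

Definition flipf (f : {ffun seq_sub D -> bool}) : {ffun seq_sub D -> bool} :=
  [ffun y => f y (+) Sf (val y)].

Lemma flipfK : involutive flipf.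
Proof. by move=> f; apply/ffunP => y; rewrite !ffunE addbK. Qed.

Lemma flipf_inj : injective flipf.
Proof. exact: inv_inj flipfK. Qed.

Lemma glue_flip (tau : Z2 -> bool) f (x : Z2) : Defs.glue tau (flipf f) x = Defs.glue tau f x (+) Sf x.
Proof.
rewrite /Defs.glue; case: (insubP (seq_sub D) x) => [y hy <-|hn] /=; first by rewrite ffunE.
case hS : (Sf x); last by rewrite addbF.
by move: hn; rewrite /= (hSD hS).
Qed.

Lemma hamil_glue_flip (w : edge -> R) (tau : Z2 -> bool) f :
  hamil D w (Defs.glue tau (flipf f)) = hamil D w (Defs.glue tau f) + 2 * gamma_energy g w (Defs.glue tau f).
Proof. by apply: hamil_flip => x _; rewrite glue_flip. Qed.

Lemma term_flip (w : edge -> R) (tau : Z2 -> bool) f e : e \in g ->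
  w e * spin (Defs.glue tau (flipf f) (end1 e)) * spin (Defs.glue tau (flipf f) (end2 e))
  = - (w e * spin (Defs.glue tau f (end1 e)) * spin (Defs.glue tau f (end2 e))).
Proof.
move=> eg; rewrite !glue_flip !spin_xor; have := S_edge e; rewrite eg.
by case: (Sf (end1 e)); case: (Sf (end2 e)) => // _; ring.
Qed.

Lemma spin_norm b : `|spin b : R| = 1.
Proof. by case: b; rewrite /spin ?normrN normr1. Qed.

Lemma unsat_energy (w : edge -> R) s : all (unsatisfied w s) g ->
  gamma_energy g w s = - absw g w.
Proof.
move/allP => h; rewrite /gamma_energy /absw -sumrN; apply: eq_big_seq => e eg.
have := h e eg; rewrite /unsatisfied => hlt.
rewrite -[LHS]opprK; congr (- _).
rewrite -(ltr0_norm hlt) !normrM !spin_norm !mulr1 //.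
Qed.

Lemma part2 (tau : Z2 -> bool) (w : edge -> R) (beta : R) : g != [::] ->
  gibbs D tau w beta (fun s => all (unsatisfied w s) g) < expR (- (2 * beta * absw g w)).
Proof.
move=> gne.
pose k := expR (- (2 * beta * absw g w)).
pose ex := fun f : {ffun seq_sub D -> bool} => expR (- beta * hamil D w (Defs.glue tau f)).
pose A := fun f : {ffun seq_sub D -> bool} => all (unsatisfied w (Defs.glue tau f)) g.
have key f : A f -> ex f = k * ex (flipf f).
  move=> hA; rewrite /ex hamil_glue_flip (unsat_energy hA) /k -expRD; congr expR; ring.
have disj f : A f -> ~~ A (flipf f).
  have [e0 e0g] : exists e0, e0 \in g.
    by case: (g) gne => // e0 ? _; exists e0; rewrite inE eqxx.
  move=> /allP /(_ e0 e0g) h0; apply/negP => /allP /(_ e0 e0g).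
  move: h0; rewrite /unsatisfied (term_flip _ _ _ e0g) oppr_lt0 => ha hb.
  by have := lt_trans ha hb; rewrite ltxx.
have ex0 f : 0 < ex f by rewrite /ex expR_gt0.
pose N := \sum_(f | A f) ex f.
pose M := \sum_(f | A (flipf f)) ex f.
pose Z := \sum_f ex f.
have hN : N = k * M.
  rewrite /N /M (eq_bigr (fun f => k * ex (flipf f))); last by move=> f /key.
  rewrite -mulr_sumr (reindex_inj flipf_inj) /=.
  by congr (_ * _); apply: eq_bigr => f _; rewrite flipfK.
have hM0 : 0 <= M by apply: sumr_ge0 => f _; apply: ltW.
have hNMZ : N + M <= Z.
  rewrite /Z (bigID A) /= lerD2l.
  rewrite (bigID (fun f => A (flipf f))) /= -[X in X <= _]addr0 lerD //.
    rewrite le_eqVlt; apply/orP; left; apply/eqP; apply: eq_bigl => f.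
    by case hA : (A f); case hB : (A (flipf f)) => //=; move: (disj _ hA); rewrite hB.
  by apply: sumr_ge0 => f _; apply: ltW.
have hZ : 0 < Z.
  rewrite /Z (bigD1 [ffun => true]) //=; apply: ltr_pwDl => //.
  by apply: sumr_ge0 => f _; apply: ltW.
have hk : 0 < k by rewrite /k expR_gt0.
change (N / Z < k); rewrite ltr_pdivrMr //.
case: (eqVneq M 0) => hM.
  by rewrite hN hM mulr0 mulr_gt0.
have hMp : 0 < M by rewrite lt_neqAle eq_sym hM hM0.
have hkM : 0 < k * M by rewrite mulr_gt0.
rewrite hN in hNMZ *; rewrite ltr_pM2l //; lra.
Qed.

End Flip.

Section Part1comb.
Variable R : realType.

Definition rng : seq int := [seq (n%:Z - Ub) | n <- iota 0 (absz (2 * Ub))].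
Definition Cbox : seq Z2 := [seq (a, b) | a <- rng, b <- rng].

Lemma mem_rng a : - Ub < a < Ub -> a \in rng.
Proof.
move=> /andP[h1 h2]; apply/mapP; exists (absz (a + Ub)).
  by rewrite mem_iota add0n; lia.
lia.
Qed.

Lemma hSC x : Sf x -> x \in Cbox.
Proof.
move=> /Sf_supp [h1 h2]; rewrite [x]surjective_pairing.
by apply: allpairs_f; apply: mem_rng.
Qed.

Definition K := clos Cbox.
Lemma hSK x : Sf x -> x \in K.
Proof. by move=> /hSC; apply: mem_clos. Qed.

Definition ext (eta : {ffun seq_sub K -> bool}) : Z2 -> bool := Defs.glue (fun _ => false) eta.
Definition en (w : edge -> R) (eta : {ffun seq_sub K -> bool}) := gamma_energy g w (ext eta).

Lemma ext_restr s x : x \in K -> ext (Defs.restr K s) x = s x.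
Proof.
move=> hx; rewrite /ext /Defs.glue; case: (insubP (seq_sub K) x) => [y hy <-|hn] /=.
  by rewrite ffunE.
by move: hn; rewrite /= hx.
Qed.

Lemma gE_restr w s : gamma_energy g w s = en w (Defs.restr K s).
Proof.
rewrite /en /gamma_energy; apply: eq_big_seq => e eg.
have := g_in_edges hSC eg; rewrite mem_edges_in => /andP[h1 h2].
by rewrite !ext_restr.
Qed.

Lemma en_flip w (eta : {ffun seq_sub K -> bool}) : en w (@flipf K eta) = - en w eta.
Proof.
rewrite /en /gamma_energy -sumrN; apply: eq_big_seq => e eg.
exact: (term_flip hSK).
Qed.

Lemma restr_flip (tau : Z2 -> bool) f :
  Defs.restr K (Defs.glue tau (@flipf Cbox f)) = @flipf K (Defs.restr K (Defs.glue tau f)).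
Proof. by apply/ffunP => y; rewrite !ffunE (glue_flip hSC). Qed.

Lemma gib_le (beta c : R) (tau : Z2 -> bool) (w : edge -> R) (eta : {ffun seq_sub K -> bool}) : 0 <= beta ->
  en w eta <= - c ->
  gibbs Cbox tau w beta (fun s => Defs.restr K s == eta)
  <= expR (- (2 * beta * c)) * gibbs Cbox tau w beta (fun s => Defs.restr K s == @flipf K eta).
Proof.
move=> hb hen.
pose ex := fun f : {ffun seq_sub Cbox -> bool} => expR (- beta * hamil Cbox w (Defs.glue tau f)).
pose Z := \sum_f ex f.
have hZ : 0 < Z.
  rewrite /Z (bigD1 [ffun => true]) //=; apply: ltr_pwDl; first exact: expR_gt0.
  by apply: sumr_ge0 => f _; apply: ltW; apply: expR_gt0.
change ((\sum_(f | Defs.restr K (Defs.glue tau f) == eta) ex f) / Z <=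
   expR (- (2 * beta * c)) * ((\sum_(f | Defs.restr K (Defs.glue tau f) == @flipf K eta) ex f) / Z)).
rewrite mulrA ler_pM2r ?invr_gt0 // mulr_sumr.
rewrite [X in _ <= X](reindex_inj (@flipf_inj Cbox)) /=.
rewrite [X in _ <= X](eq_bigl (fun f => Defs.restr K (Defs.glue tau f) == eta)); last first.
  by move=> f; rewrite restr_flip (inj_eq (@flipf_inj K)).
apply: ler_sum => f /eqP hf.
rewrite /ex (hamil_glue_flip hSC) -expRD ler_expR.
have : gamma_energy g w (Defs.glue tau f) <= - c by rewrite gE_restr hf.
nra.
Qed.

End Part1comb.

Section Part1meas.
Variable R : realType.
Variables (beta c : R) (P : probability (OmegaM R) R).
Hypotheses (hb : 0 <= beta) (hc : 0 < c) (hDLR : DLR P beta).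

Local Notation T := {ffun seq_sub K -> bool}.
Definition Aset (eta : T) : set (OmegaM R) := [set om | en om.1 eta <= - c].
Definition Bset (eta : T) : set (OmegaM R) := [set om | Defs.restr K om.2 == eta].

Lemma mAV (V : Z2 -> Prop) eta : <<s @coord_gens R V >> (Aset eta).
Proof.
have mf : measurable_fun [set: g_sigma_algebraType (@coord_gens R V)] (fun om => en om.1 eta).
  rewrite /en /gamma_energy; apply: measurable_sum => e.
  by apply: measurable_funM => //; apply: measurable_funM => //; exact: mcoord1.
have := mf measurableT [set` `]-oo, (- c)]] (measurable_itv _).
rewrite setTI; congr (_ _); apply/seteqP; split => om /=; by rewrite in_itv /=.
Qed.

Lemma mA eta : measurable (Aset eta).
Proof. apply: (@sub_meas R (fun _ => True)). exact: mAV. Qed.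

Lemma mB eta : measurable (Bset eta).
Proof.
have hm : measurable_fun [set: OmegaM R] (fun om : OmegaM R => ((Defs.restr K om.2 == eta)%:R : R)).
  apply: (@mfin2 R K (fun s => ((Defs.restr K s == eta)%:R : R))) => s s' hs.
  congr ((_ == _)%:R); apply/ffunP => y; rewrite !ffunE; apply: hs.
  exact: valP.
have := hm measurableT [set 1] (measurable_set1 1).
rewrite setTI; congr (_ _); apply/seteqP; split => om /=.
  rewrite /Bset /=; case: (Defs.restr K om.2 == eta) => //= /eqP.
  by rewrite eq_sym oner_eq0.
by rewrite /Bset /= => ->.
Qed.

Definition gib (eta : T) (om : OmegaM R) : R :=
  gibbs Cbox om.2 om.1 beta (fun s => Defs.restr (clos Cbox) s == eta).

Lemma mgib eta : measurable_fun [set: OmegaM R] (gib eta).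
Proof.
apply: (@mgibbs R Cbox beta _ K) => f s s' hs.
congr (_ == _); apply/ffunP => y; rewrite !ffunE; apply: glue_dep; apply: hs.
exact: valP.
Qed.

Lemma dlr eta eta' : P (Aset eta `&` Bset eta') = (\int[P]_(om in Aset eta) (gib eta' om)%:E)%E.
Proof. have h := (hDLR (fun t : {ffun seq_sub (clos Cbox) -> bool} => t == eta') (mAV (V := fun x => x \notin Cbox) eta)). exact h. Qed.

Let k := expR (- (2 * beta * c)).

Lemma step eta : (P (Aset eta `&` Bset eta) <= k%:E * P (Aset eta `&` Bset (flipf eta)))%E.
Proof.
have mg e' : measurable_fun (Aset eta) (fun om => (gib e' om)%:E).
  by apply/measurable_EFinP; apply: measurable_funTS; exact: mgib.
have g0 e' om : Aset eta om -> (0 <= (gib e' om)%:E)%E by move=> _; rewrite lee_fin gibbs_ge0.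
rewrite !dlr -ge0_integralZl_EFin //; last by rewrite /k ltW // expR_gt0.
  apply: ge0_le_integral => //.
  - exact: mA.
  - exact: g0.
  - exact: (measurable_funeM _ (mg _)).
  - move=> om hom; rewrite -EFinM lee_fin; exact: gib_le.
- exact: mA.
- exact: g0.
Qed.

Definition Ev := [set om : OmegaM R | gamma_energy g om.1 om.2 <= - c].
Definition Ev' := [set om : OmegaM R | c <= gamma_energy g om.1 om.2].

Lemma EvU : Ev = \big[setU/set0]_(eta <- index_enum T) (Aset eta `&` Bset eta).
Proof.
apply/seteqP; split => om.
  move=> h; apply/bigU_mem; exists (Defs.restr K om.2); first exact: mem_index_enum.
  by split; rewrite /Aset /Bset /= -?gE_restr.
move/bigU_mem => [eta _ [hA /eqP hB]].
by rewrite /Ev /= gE_restr hB.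
Qed.

Lemma EvU' : Ev' = \big[setU/set0]_(eta <- index_enum T) (Aset (flipf eta) `&` Bset eta).
Proof.
apply/seteqP; split => om.
  move=> h; apply/bigU_mem; exists (Defs.restr K om.2); first exact: mem_index_enum.
  by split; rewrite /Aset /Bset /= ?en_flip -?gE_restr // lerN2.
move/bigU_mem => [eta _ [hA /eqP hB]].
by move: hA; rewrite /Ev' /Aset /= gE_restr hB en_flip lerN2.
Qed.

Lemma disjB (F G : T -> set (OmegaM R)) :
  forall i j, i != j -> (F i `&` Bset i) `&` (G j `&` Bset j) = set0.
Proof.
move=> i j hij; apply/seteqP; split => // om [[_ /eqP h1] [_ /eqP h2]].
by move: hij; rewrite -h1 -h2 eqxx.
Qed.

Lemma part1 : (P Ev < k%:E)%E.
Proof.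
have mAB e1 e2 : measurable (Aset e1 `&` Bset e2) by apply: measurableI; [exact: mA | exact: mB].
have hEv : P Ev = (\sum_(eta <- index_enum T) P (Aset eta `&` Bset eta))%E.
  by rewrite EvU; apply: P_bigU; [exact: index_enum_uniq | move=> i; exact: mAB | exact: disjB].
have hEv' : P Ev' = (\sum_(eta <- index_enum T) P (Aset (flipf eta) `&` Bset eta))%E.
  by rewrite EvU'; apply: P_bigU; [exact: index_enum_uniq | move=> i; exact: mAB | exact: disjB].
have mEv : measurable Ev by rewrite EvU; apply: bigsetU_measurable => i _; exact: mAB.
have mEv' : measurable Ev' by rewrite EvU'; apply: bigsetU_measurable => i _; exact: mAB.
have le1 : (P Ev <= k%:E * P Ev')%E.
  rewrite hEv hEv' ge0_sume_distrr; last by move=> i _; exact: measure_ge0.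
  rewrite [X in (_ <= X)%E](reindex_inj (@flipf_inj K)) /=.
  apply: lee_sum => eta _; rewrite flipfK; exact: step.
have le2 : (P Ev + P Ev' <= 1)%E.
  have mU : measurable (Ev `|` Ev') by apply: measurableU.
  have h := @probability_le1 _ _ _ P _ mU.
  rewrite measureU // in h.
  apply/seteqP; split => // om [h1 h2]; move: h1 h2; rewrite /Ev /Ev' /= => h1 h2.
  have h3 := le_trans h2 h1; move: h3 hc; clear; move=> h3 hc. have h4 : - c < c by rewrite (lt_trans _ hc) // oppr_lt0.
  by have := le_lt_trans h3 h4; rewrite ltxx.
have hk : 0 < k by rewrite /k expR_gt0.
have hf A : measurable A -> P A = (fine (P A))%:E.
  by move=> mA'; rewrite fineK // fin_num_measure.
have h3 := measure_ge0 P Ev; have h4 := measure_ge0 P Ev'.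
move: le1 le2 h3 h4; rewrite (hf _ mEv) (hf _ mEv') -EFinM -EFinD !lee_fin lte_fin.
move: (fine (P Ev)) (fine (P Ev')) => r r' h1 h2 h3 h4.
nra.
Qed.

End Part1meas.

Lemma g_ne (hU : union_disjoint_simple_cycles g) : g != [::].
Proof.
case: hU => cs [csne [hcyc [_ hg]]].
case: cs csne hcyc hg => // p cs _ hcyc hg.
have [hk [_ hcr]] := hcyc p (mem_head _ _).
have h0 : (0 < size p)%N by case: (size p) hk.
have [e he] := hcr 0%N h0.
have : e \in g by apply/hg; exists p; [exact: mem_head | exists 0%N; split].
by case: (g).
Qed.
End Comb.

Theorem mainTheorem4 (R : realType) (beta : R) (P : probability (OmegaM R) R)
  (g : seq edge) :
  0 <= beta ->
  EA_spin_glass beta P -> transl_invariant P ->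
  uniq g -> union_disjoint_simple_cycles g ->
  (forall c : R, 0 < c ->
     (P [set om : OmegaM R | (gamma_energy g om.1 om.2 <= - c)%R]
      < (expR (- (2 * beta * c)))%:E)%E)
  /\
  (forall (D : seq Z2), (forall v, D_gamma (R:=R) g v -> v \in D) ->
   forall (tau : Z2 -> bool) (w : edge -> R),
     gibbs D tau w beta (fun s => all (unsatisfied w s) g)
     < expR (- (2 * beta * absw g w))).
Proof.
move=> hb [_ hDLR] _ ug hU.
have edeg := deg_even ug hU.
split.
  move=> c hc.
  exact: (part1 ug edeg hb hc hDLR).
move=> D hD tau w.
apply: (part2 ug edeg _ _ _ _ (g_ne hU)).
by move=> x hx; apply: hD; exact: (Sf_Dgamma ug edeg).
Qed.
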